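(* Let $G$ be a digraph and $f$ a discrete Morse function on $G$ such that every vertex $v$ with $f(v)=0$ has out-degree $1$ and in-degree $1$, and let $(\tilde G,\tilde f)$ be the $\mathcal M$-collapse of $(G,f)$. Then every pair $(\alpha,\beta)\in\mathcal M(\tilde G,\tilde f)$ has one of the forms $$\alpha=\cdots u,\ \ \beta=\cdots u\,v\qquad\text{or}\qquad \alpha=w\cdots,\ \ \beta=v\,w\cdots$$ (i.e. either $\alpha$ ends at $u$ and $\beta=\alpha v$, or $\alpha$ starts at $w$ and $\beta=v\alpha$), where $v$ is a vertex with $f(v)=0$, $u\to v\to w$ in $G$, and $u\to w$ is not a directed edge in $G$.
   Context: A digraph $G=(V,E)$ consists of a set $V$ and $E\subseteq(V\times V)\setminus\{(v,v)\}$; $(u,v)\in E$ is written $u\to v$. The out-degree (in-degree) of $v$ is the number of edges starting (ending) at $v$. An allowed elementary $n$-path is a sequence $v_0\cdots v_n$ of vertices with $v_{i-1}\to v_i\in E$ for $1\le i\le n$. For allowed elementary paths, $\gamma'<\gamma$ means $\gamma'$ is obtained from $\gamma$ by deleting some entries. A map $f:V\to[0,+\infty)$ is a discrete Morse function on $G$ if for every allowed elementary path $v_0\cdots v_n$: (i) there is at most one index $i$ with $f(v_i)=0$ such that $v_0\cdots v_{i-1}v_{i+1}\cdots v_n$ is an allowed elementary $(n-1)$-path; (ii) there is at most one vertex $u$ with $f(u)=0$ such that for some $-1\le j\le n$ the sequence $v_0\cdots v_juv_{j+1}\cdots v_n$ (meaning $uv_0\cdots v_n$ if $j=-1$, $v_0\cdots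 v_nu$ if $j=n$) is an allowed elementary $(n+1)$-path. Set $f(v_0\cdots v_n)=\sum_if(v_i)$. $\mathcal M(G,f)$ is the set of pairs $(\alpha,\beta)$ with $\alpha$ an allowed elementary $n$-path, $\beta$ an allowed elementary $(n+1)$-path for some $n\ge0$, $\alpha<\beta$ and $f(\alpha)=f(\beta)$. $\mathcal M$-collapse: under the degree hypothesis each zero $v$ of $f$ has a unique in-neighbour $u$ and out-neighbour $w$; let $Z$ be the set of zeros $v$ of $f$ for which $u\to w$ is an edge of $G$. Then $\tilde G$ has vertex set $V\setminus Z$ and edge set $E\setminus\{u\to v,\ v\to w: v\in Z\}$ (the result of successively substituting each such $u\to v\to w$ by $u\to w$), and $\tilde f=f|_{V\setminus Z}$. *)

(* Defs.v *)
From mathcomp Require Import all_boot all_order all_algebra.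
Set Implicit Arguments. Unset Strict Implicit. Unset Printing Implicit Defensive.
Import Order.TTheory GRing.Theory Num.Theory.
Local Open Scope ring_scope.

(* A digraph is given by a vertex set S : {set V} inside a finite type V and an
   edge relation E : rel V (only edges between vertices of S matter). *)
Section Digraph.
Variables (V : finType) (S : {set V}) (E : rel V).

Definition allowed (p : seq V) : bool :=
  match p with
  | [::] => false
  | x :: q => all (fun v => v \in S) p && path E x q
  end.

Definition del_at (p : seq V) (i : nat) : seq V := take i p ++ drop i.+1 p.
Definition ins_at (p : seq V) (j : nat) (u : V) : seq V := take j p ++ u :: drop j p.

Variable (R : realFieldType) (f : V -> R).

Definition morse_cond_i (p : seq V) : bool :=
  match p with
  | [::] => true
  | x0 :: _ =>
      (count (fun i => (f (nth x0 p i) == 0%R) && allowed (del_at p i))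
            (iota 0 (size p)) <= 1)%N
  end.

Definition morse_cond_ii (p : seq V) : bool :=
  (#|[set u in S | (f u == 0%R) &&
        [exists j : 'I_(size p).+1, allowed (ins_at p j u)]]| <= 1)%N.

Definition discrete_morse : Prop :=
  (forall v, v \in S -> 0 <= f v) /\
  (forall p, allowed p -> morse_cond_i p /\ morse_cond_ii p).

Definition fweight (p : seq V) : R := \sum_(x <- p) f x.

Definition inM (alpha beta : seq V) : bool :=
  [&& allowed alpha, allowed beta, size beta == (size alpha).+1,
      subseq alpha beta & fweight alpha == fweight beta].

End Digraph.

Section Collapse.
Variables (V : finType) (E : rel V) (R : realFieldType) (f : V -> R).

(* Z : zeros v of f whose (unique) in-neighbour u and out-neighbour w satisfy u -> w *)
Definition collapseZ : {set V} :=
  [set v | (f v == 0%R) &&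
     [exists u, exists w, [&& E u v, E v w & E u w]]].

Definition collapseV : {set V} := ~: collapseZ.

Definition collapseE : rel V := fun x y =>
  E x y && ~~ [exists v in collapseZ, exists u, exists w,
     [&& E u v, E v w, E u w & ((x == u) && (y == v) || (x == v) && (y == w))]].

End Collapse.

(* Main.v *)
Require Import Defs.
From mathcomp Require Import all_boot all_order all_algebra.
From mathcomp Require Import lra.
Import Order.TTheory GRing.Theory Num.Theory.
Local Open Scope ring_scope.

Lemma subseq_one (T : eqType) (b a : seq T) :
  subseq a b -> size b = (size a).+1 ->
  exists p1 x p2, a = p1 ++ p2 /\ b = p1 ++ x :: p2.
Proof.
elim: b a => [|y b IH] [|z a] //=.
- move=> _ [/size0nil ->]; by exists [::], y, [::].
- case: eqP => [-> Hs [Hsz]|_ Hs [Hsz]].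
  + have [p1 [x [p2 [-> ->]]]] := IH a Hs Hsz.
    by exists (y :: p1), x, p2.
  + have := size_subseq_leqif Hs; rewrite /= Hsz => -[_].
    rewrite eqxx => /esym/eqP <-.
    by exists [::], y, (z :: a).
Qed.

Lemma allowed_adj (V : finType) (S : {set V}) (E : rel V) s1 a c s2 :
  allowed S E (s1 ++ a :: c :: s2) -> E a c.
Proof.
case: s1 => [|h s1] /= /andP [_ Hp]; first by case/andP: Hp.
by move: Hp; rewrite cat_path /= => /and3P [_ _ /andP[]].
Qed.

Lemma allowed_mem (V : finType) (S : {set V}) (E : rel V) p x :
  allowed S E p -> x \in p -> x \in S.
Proof. case: p => [|h t] // /andP[H _] Hx; exact: (allP H x Hx). Qed.

Theorem proposition6p1 (V : finType) (E : rel V) (R : realFieldType) (f : V -> R) :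
  irreflexive E ->
  discrete_morse [set: V] E f ->
  (forall v, f v = 0 ->
     #|[set w | E v w]| = 1%N /\ #|[set u | E u v]| = 1%N) ->
  forall alpha beta : seq V,
    inM (collapseV E f) (collapseE E f) f alpha beta ->
    exists v u w : V,
      [/\ f v = 0, E u v, E v w, ~~ E u w &
        ((last u alpha = u /\ beta = rcons alpha v) \/
         (head w alpha = w /\ beta = v :: alpha))].
Proof.
move=> irrE _ deg alpha beta /and5P[Aa Ab /eqP Hsz Hsub /eqP Hw].
have [p1 [x [p2 [Ha Hb]]]] := @subseq_one _ beta alpha Hsub Hsz.
have fx0 : f x = 0.
  move: Hw; rewrite Ha Hb /fweight !big_cat /= big_cons => H; lra.
have xV : x \in collapseV E f.
  by apply: (@allowed_mem _ _ _ beta x Ab); rewrite Hb mem_cat in_cons eqxx orbT.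
have [/eqP/cards1P [w0 Hw0] /eqP/cards1P [u0 Hu0]] := deg x fx0.
have Ew : forall y, E x y -> y = w0.
  by move=> y Ey; apply/set1P; rewrite -Hw0 inE.
have Eu : forall y, E y x -> y = u0.
  by move=> y Ey; apply/set1P; rewrite -Hu0 inE.
have Exw : E x w0.
  have : w0 \in [set w | E x w] by rewrite Hw0 set11.
  by rewrite inE.
have Eux : E u0 x.
  have : u0 \in [set u | E u x] by rewrite Hu0 set11.
  by rewrite inE.
have nEuw : ~~ E u0 w0.
  apply/negP => E0; move: xV; rewrite in_setC inE fx0 eqxx /= => /negP; apply.
  by apply/existsP; exists u0; apply/existsP; exists w0; rewrite Eux Exw E0.
have cE : forall a c, collapseE E f a c -> E a c by move=> a c /andP[].
exists x, u0, w0; split => //.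
case: p1 / lastP Ha Hb => [|p a0] Ha Hb.
  case: p2 Ha Hb => [|y q] Ha Hb; first by rewrite Ha in Aa.
  have Exy : E x y.
    by apply: cE; apply: (@allowed_adj _ _ _ [::] x y q); rewrite -Hb; exact: Ab.
  by right; rewrite Ha Hb /= (Ew _ Exy).
case: p2 Ha Hb => [|y q] Ha Hb.
  have Eax : E a0 x.
    by apply: cE; apply: (@allowed_adj _ _ _ p a0 x [::]); rewrite -cat_rcons -Hb; exact: Ab.
  by left; rewrite Ha Hb cats0 last_rcons cats1 (Eu _ Eax).
have Eax : E a0 x.
  by apply: cE; apply: (@allowed_adj _ _ _ p a0 x (y :: q)); rewrite -cat_rcons -Hb; exact: Ab.
have Exy : E x y.
  by apply: cE; apply: (@allowed_adj _ _ _ (rcons p a0) x y q); rewrite -Hb; exact: Ab.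
have Eay : E a0 y.
  by apply: cE; apply: (@allowed_adj _ _ _ p a0 y q); rewrite -cat_rcons -Ha; exact: Aa.
by move: nEuw; rewrite -(Eu _ Eax) -(Ew _ Exy) Eay.
Qed.
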